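(* Let $\alpha,\beta$ be positive quadratic irrationals and let $A,B\in GL(2,\mathbb Z)$ be non-identity matrices with $\operatorname{Aut}(\mathcal A_\alpha)\cong\mathbb T^2\rtimes_{\psi_A}\mathbb Z$ and $\operatorname{Aut}(\mathcal A_\beta)\cong\mathbb T^2\rtimes_{\psi_B}\mathbb Z$. Then $\operatorname{Aut}(\mathcal A_\alpha)\cong\operatorname{Aut}(\mathcal A_\beta)$ if and only if there exists $C\in GL(2,\mathbb Z)$ with $B=C^{-1}AC$ or $B^{-1}=C^{-1}AC$.
   Context: For a positive irrational $\alpha$, $\mathcal A_\alpha=\{f\in C(\mathbb T^2): \hat f(m,n)=0 \text{ whenever } m+\alpha n<0\}$ (with $\mathbb T$ the unit circle and $\hat f$ the Fourier transform on $\mathbb Z^2$), a uniform algebra with the sup norm, and $\operatorname{Aut}(\mathcal A_\alpha)$ is its group of isometric automorphisms. For $A=\begin{bmatrix} a&b\\ c&d\end{bmatrix}\in GL(2,\mathbb Z)$, $\psi_A:\mathbb T^2\to\mathbb T^2$ is $\psi_A(c_1,c_2)=(c_1^ac_2^b,c_1^cc_2^d)$; the (continuous) automorphisms of the group $\mathbb T^2$ are exactly the $\psi_A$. The semidirect product $\mathbb T^2\rtimes_{\psi_A}\mathbb Z$ has multiplication $(\mathbf c,m)\cdot(\mathbf d,n)=(\mathbf c\,\psi_A^m(\mathbf d),m+n)$. Isomorphisms of these semidirect products are understood with automorphisms of $\mathbb T^2$ taken in the continuous sense (i.e. as topological groups). *)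

(* Defs.v *)
From Stdlib Require Import Reals ZArith List.
Open Scope R_scope.

Definition C := (R * R)%type.
Definition Cadd (z w : C) : C := (fst z + fst w, snd z + snd w).
Definition Csub (z w : C) : C := (fst z - fst w, snd z - snd w).
Definition Cmul (z w : C) : C :=
  (fst z * fst w - snd z * snd w, fst z * snd w + snd z * fst w).
Definition Cnorm (z : C) : R := sqrt (fst z * fst z + snd z * snd z).

Record Mat2 := mkMat2 { m11 : Z; m12 : Z; m21 : Z; m22 : Z }.
Definition Mmul (A B : Mat2) : Mat2 :=
  mkMat2 (m11 A * m11 B + m12 A * m21 B)%Z (m11 A * m12 B + m12 A * m22 B)%Z
         (m21 A * m11 B + m22 A * m21 B)%Z (m21 A * m12 B + m22 A * m22 B)%Z.
Definition Mid : Mat2 := mkMat2 1 0 0 1.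
Definition Mdet (A : Mat2) : Z := (m11 A * m22 A - m12 A * m21 A)%Z.
Definition inGL2Z (A : Mat2) : Prop := Mdet A = 1%Z \/ Mdet A = (-1)%Z.
(* inverse of A in GL(2,Z): det(A) * adj(A)  (det^-1 = det when det = +-1) *)
Definition Minv (A : Mat2) : Mat2 :=
  let d := Mdet A in
  mkMat2 (d * m22 A)%Z (- (d * m12 A))%Z (- (d * m21 A))%Z (d * m11 A)%Z.
Fixpoint Mpow (A : Mat2) (k : nat) : Mat2 :=
  match k with O => Mid | S k' => Mmul A (Mpow A k') end.
Definition Mzpow (A : Mat2) (m : Z) : Mat2 :=
  if (0 <=? m)%Z then Mpow A (Z.to_nat m) else Mpow (Minv A) (Z.to_nat (- m)).

(* ---------- the circle T = R/Z, in additive coordinate theta in [0,1),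
   theta <-> exp(2 pi i theta) ---------- *)
Definition Tt := {t : R | 0 <= t < 1}.
Definition T2 := (Tt * Tt)%type.
Definition distT (x y : R) : R := Rmin (frac_part (x - y)) (frac_part (y - x)).

(* psi_A (c1,c2) = (c1^a c2^b, c1^c c2^d), in additive coordinates *)
Definition psi1 (A : Mat2) (t1 t2 : R) : R :=
  frac_part (IZR (m11 A) * t1 + IZR (m12 A) * t2).
Definition psi2 (A : Mat2) (t1 t2 : R) : R :=
  frac_part (IZR (m21 A) * t1 + IZR (m22 A) * t2).

Definition SD := (T2 * Z)%type.
(* multiplication graph: z = x * y, with
   (c,m)(d,n) = (c psi_A^m(d), m+n) and psi_A^m = psi_{A^m} *)
Definition SDmul (A : Mat2) (x y z : SD) : Prop :=
  let '((c1, c2), m) := x in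
  let '((d1, d2), n) := y in
  let '((e1, e2), k) := z in
  let Am := Mzpow A m in
  k = (m + n)%Z /\
  proj1_sig e1 = frac_part (proj1_sig c1 + psi1 Am (proj1_sig d1) (proj1_sig d2)) /\
  proj1_sig e2 = frac_part (proj1_sig c2 + psi2 Am (proj1_sig d1) (proj1_sig d2)).
(* topology: product of the torus topology and the discrete topology on Z *)
Definition SDopen (U : SD -> Prop) : Prop :=
  forall x : SD, U x -> exists eps, 0 < eps /\
    forall y : SD, snd y = snd x ->
      distT (proj1_sig (fst (fst y))) (proj1_sig (fst (fst x))) < eps ->
      distT (proj1_sig (snd (fst y))) (proj1_sig (snd (fst x))) < eps -> U y.

(* ---------- C(T^2) as continuous doubly 1-periodic functions R^2 -> C ---------- *)
Definition periodic2 (f : R -> R -> C) : Prop :=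
  forall x y, f (x + 1) y = f x y /\ f x (y + 1) = f x y.
Definition continuous2 (f : R -> R -> C) : Prop :=
  forall x y eps, 0 < eps -> exists delta, 0 < delta /\
    forall x' y', Rabs (x' - x) < delta -> Rabs (y' - y) < delta ->
      Cnorm (Csub (f x' y') (f x y)) < eps.

Definition RintEq (g : R -> R) (a b l : R) : Prop :=
  exists pr : Riemann_integrable g a b, RiemannInt pr = l.
Definition Rint2Eq (g : R -> R -> R) (l : R) : Prop :=
  exists G : R -> R, (forall y, RintEq (fun x => g x y) 0 1 (G y)) /\ RintEq G 0 1 l.

(* hat f (m,n) = \int\int f(x,y) e^{-2 pi i (m x + n y)} dx dy = 0 *)
Definition fourier_zero (f : R -> R -> C) (m n : Z) : Prop :=
  let ph x y := 2 * PI * (IZR m * x + IZR n * y) in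
  Rint2Eq (fun x y => fst (f x y) * cos (ph x y) + snd (f x y) * sin (ph x y)) 0 /\
  Rint2Eq (fun x y => snd (f x y) * cos (ph x y) - fst (f x y) * sin (ph x y)) 0.

Definition inA (alpha : R) (f : R -> R -> C) : Prop :=
  periodic2 f /\ continuous2 f /\
  forall m n : Z, IZR m + alpha * IZR n < 0 -> fourier_zero f m n.
Definition SA (alpha : R) := {f : R -> R -> C | inA alpha f}.

Definition supLe (g : R -> R -> C) (M : R) : Prop := forall x y, Cnorm (g x y) <= M.

Definition isAut (alpha : R) (Phi : SA alpha -> SA alpha) : Prop :=
  (forall f g, Phi f = Phi g -> f = g) /\
  (forall g, exists f, Phi f = g) /\
  (forall f g h : SA alpha,
     (forall x y, proj1_sig h x y = Cadd (proj1_sig f x y) (proj1_sig g x y)) ->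
     forall x y, proj1_sig (Phi h) x y = Cadd (proj1_sig (Phi f) x y) (proj1_sig (Phi g) x y)) /\
  (forall (lam : C) (f h : SA alpha),
     (forall x y, proj1_sig h x y = Cmul lam (proj1_sig f x y)) ->
     forall x y, proj1_sig (Phi h) x y = Cmul lam (proj1_sig (Phi f) x y)) /\
  (forall f g h : SA alpha,
     (forall x y, proj1_sig h x y = Cmul (proj1_sig f x y) (proj1_sig g x y)) ->
     forall x y, proj1_sig (Phi h) x y = Cmul (proj1_sig (Phi f) x y) (proj1_sig (Phi g) x y)) /\
  (forall f M, supLe (proj1_sig (Phi f)) M <-> supLe (proj1_sig f) M).

Definition AutA (alpha : R) := {Phi : SA alpha -> SA alpha | isAut alpha Phi}.
Definition AutMul (alpha : R) (Phi Psi Chi : AutA alpha) : Prop :=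
  forall f, proj1_sig Chi f = proj1_sig Phi (proj1_sig Psi f).
Definition supLt (g : R -> R -> C) (eps : R) : Prop :=
  exists d, d < eps /\ supLe g d.
Definition AutOpen (alpha : R) (U : AutA alpha -> Prop) : Prop :=
  forall Phi0, U Phi0 -> exists (fs : list (SA alpha)) (eps : R), 0 < eps /\
    forall Phi : AutA alpha,
      (forall f, In f fs ->
         supLt (fun x y => Csub (proj1_sig (proj1_sig Phi f) x y)
                                (proj1_sig (proj1_sig Phi0 f) x y)) eps) ->
      U Phi.

Definition is_topgrp_iso {X Y : Type}
  (mX : X -> X -> X -> Prop) (oX : (X -> Prop) -> Prop)
  (mY : Y -> Y -> Y -> Prop) (oY : (Y -> Prop) -> Prop) (F : X -> Y) : Prop :=
  (forall a b, F a = F b -> a = b) /\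
  (forall y, exists x, F x = y) /\
  (forall a b c, mX a b c -> mY (F a) (F b) (F c)) /\
  (forall U, oY U -> oX (fun x => U (F x))) /\
  (forall V, oX V -> oY (fun y => exists x, V x /\ F x = y)).

Definition topgrp_isomorphic {X Y : Type}
  (mX : X -> X -> X -> Prop) (oX : (X -> Prop) -> Prop)
  (mY : Y -> Y -> Y -> Prop) (oY : (Y -> Prop) -> Prop) : Prop :=
  exists F : X -> Y, is_topgrp_iso mX oX mY oY F.

Definition irrational (x : R) : Prop :=
  forall p q : Z, q <> 0%Z -> x <> IZR p / IZR q.
Definition quadratic_irrational (x : R) : Prop :=
  irrational x /\
  exists a b c : Z, a <> 0%Z /\ IZR a * x ^ 2 + IZR b * x + IZR c = 0.

(* Main.v *)
Require Import Defs.
From Stdlib Require Import Reals ZArith List Lra Lia Psatz.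
From Stdlib Require Import FunctionalExtensionality PropExtensionality ProofIrrelevance ClassicalEpsilon.
Open Scope R_scope.
Open Scope R_scope.

Lemma pred_ext {X} (P Q : X -> Prop) : (forall x, P x <-> Q x) -> P = Q.
Proof. intros H; apply functional_extensionality; intro x; apply propositional_extensionality; auto. Qed.

Lemma iso_comp {X Y Z} mX oX mY oY mZ oZ (F : X -> Y) (G : Y -> Z) :
  is_topgrp_iso mX oX mY oY F -> is_topgrp_iso mY oY mZ oZ G ->
  is_topgrp_iso mX oX mZ oZ (fun x => G (F x)).
Proof.
  intros [Fi [Fs [Fh [Fc Fo]]]] [Gi [Gs [Gh [Gc Go]]]].
  split; [|split;[|split;[|split]]].
  - intros a b H. apply Fi, Gi, H.
  - intro z. destruct (Gs z) as [y Hy]. destruct (Fs y) as [x Hx]. exists x. congruence.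
  - intros a b c H. apply Gh, Fh, H.
  - intros U HU. apply (Fc _ (Gc U HU)).
  - intros V HV. specialize (Go _ (Fo V HV)).
    replace (fun z => exists x, V x /\ G (F x) = z) with
      (fun y => exists x, (exists x0, V x0 /\ F x0 = x) /\ G x = y); [exact Go|].
    apply pred_ext; intro z; split.
    + intros [y [[x [Hx1 Hx2]] Hy]]. exists x. subst. auto.
    + intros [x [Hx1 Hx2]]. exists (F x). split; eauto.
Qed.

Lemma iso_inv {X Y} mX oX mY oY (F : X -> Y) :
  (forall a b, exists c, mX a b c) ->
  (forall a b c c', mY a b c -> mY a b c' -> c = c') ->
  is_topgrp_iso mX oX mY oY F ->
  exists G, is_topgrp_iso mY oY mX oX G /\ (forall y, F (G y) = y) /\ (forall x, G (F x) = x).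
Proof.
  intros Tot Fun [Fi [Fs [Fh [Fc Fo]]]].
  set (G := fun y => proj1_sig (constructive_indefinite_description _ (Fs y))).
  assert (FG : forall y, F (G y) = y).
  { intro y. unfold G. exact (proj2_sig (constructive_indefinite_description _ (Fs y))). }
  assert (GF : forall x, G (F x) = x). { intro x. apply Fi. apply FG. }
  exists G. split; [|split; auto].
  split; [|split;[|split;[|split]]].
  - intros a b H. rewrite <- (FG a), <- (FG b), H. auto.
  - intro x. exists (F x). auto.
  - intros a b c H. destruct (Tot (G a) (G b)) as [c' Hc'].
    pose proof (Fh _ _ _ Hc') as H'. rewrite !FG in H'.
    rewrite (Fun _ _ _ _ H H'), GF. exact Hc'.
  - intros V HV. specialize (Fo V HV).
    replace (fun y => V (G y)) with (fun y => exists x, V x /\ F x = y); [exact Fo|].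
    apply pred_ext; intro y; split.
    + intros [x [Hx <-]]. rewrite GF. auto.
    + intros H. exists (G y). auto.
  - intros U HU. specialize (Fc U HU).
    replace (fun x => exists y, U y /\ G y = x) with (fun x => U (F x)); [exact Fc|].
    apply pred_ext; intro x; split.
    + intros H. exists (F x). auto.
    + intros [y [Hy <-]]. rewrite FG. auto.
Qed.

Lemma aut_comp alpha (Phi Psi : AutA alpha) : isAut alpha (fun f => proj1_sig Phi (proj1_sig Psi f)).
Proof.
  destruct Phi as [P [Pi [Ps [Pa [Pl [Pm Pn]]]]]]; destruct Psi as [Q [Qi [Qs [Qa [Ql [Qm Qn]]]]]]; simpl.
  split; [|split;[|split;[|split;[|split]]]].
  - intros f g H. apply Qi, Pi, H.
  - intro g. destruct (Ps g) as [f Hf]. destruct (Qs f) as [h Hh]. exists h. congruence.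
  - intros f g h H. apply Pa. apply Qa. exact H.
  - intros lam f h H. apply Pl. apply Ql. exact H.
  - intros f g h H. apply Pm, Qm, H.
  - intros f M. rewrite Pn. apply Qn.
Qed.

Lemma AutMul_total alpha : forall a b, exists c, AutMul alpha a b c.
Proof. intros a b. exists (exist _ _ (aut_comp alpha a b)). intro f. reflexivity. Qed.

Lemma AutMul_fun alpha : forall a b c c', AutMul alpha a b c -> AutMul alpha a b c' -> c = c'.
Proof.
  intros a b [c Hc] [c' Hc'] H1 H2. unfold AutMul in *; simpl in *.
  assert (c = c') by (apply functional_extensionality; intro f; rewrite H1, H2; reflexivity).
  subst. f_equal. apply proof_irrelevance.
Qed.

Definition meq (x y : R) := exists k : Z, x = y + IZR k.

Lemma meq_refl x : meq x x. Proof. exists 0%Z. simpl; ring. Qed.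
Lemma meq_sym x y : meq x y -> meq y x.
Proof. intros [k Hk]. exists (-k)%Z. rewrite opp_IZR. lra. Qed.
Lemma meq_trans x y z : meq x y -> meq y z -> meq x z.
Proof. intros [k Hk] [l Hl]. exists (k+l)%Z. rewrite plus_IZR. lra. Qed.
Lemma meq_add x y x' y' : meq x x' -> meq y y' -> meq (x+y) (x'+y').
Proof. intros [k Hk] [l Hl]. exists (k+l)%Z. rewrite plus_IZR. lra. Qed.
Lemma meq_opp x y : meq x y -> meq (-x) (-y).
Proof. intros [k Hk]. exists (-k)%Z. rewrite opp_IZR. lra. Qed.
Lemma meq_zmul (n : Z) x y : meq x y -> meq (IZR n * x) (IZR n * y).
Proof. intros [k Hk]. exists (n*k)%Z. rewrite mult_IZR. subst. ring. Qed.
Lemma meq_nmul (n : nat) x y : meq x y -> meq (INR n * x) (INR n * y).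
Proof. rewrite INR_IZR_INZ. apply meq_zmul. Qed.
Lemma meq_int k : meq (IZR k) 0.
Proof. exists k. ring. Qed.
Lemma meq_add_int x k : meq (x + IZR k) x.
Proof. exists k. ring. Qed.
Lemma meq_eq x y : x = y -> meq x y. Proof. intros ->; apply meq_refl. Qed.
Lemma meq_cancel_l x y z : meq (x + y) (x + z) -> meq y z.
Proof. intros [k Hk]. exists k. lra. Qed.
Lemma meq_sub0 x y : meq (x - y) 0 -> meq x y.
Proof. intros [k Hk]. exists k. lra. Qed.

Lemma frac_eqm x : meq (frac_part x) x.
Proof. unfold frac_part. exists (- Int_part x)%Z. rewrite opp_IZR. ring. Qed.
Lemma frac_range x : 0 <= frac_part x < 1.
Proof. destruct (base_fp x). lra. Qed.

Lemma int_small k : -1 < IZR k < 1 -> k = 0%Z.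
Proof. intros [H1 H2]. apply lt_IZR in H1. apply lt_IZR in H2. lia. Qed.

Lemma meq_unit x y : 0 <= x < 1 -> 0 <= y < 1 -> meq x y -> x = y.
Proof.
  intros Hx Hy [k Hk]. assert (k = 0%Z) by (apply int_small; lra). subst k. simpl in Hk. lra.
Qed.
Lemma meq_small x y : Rabs (x - y) < 1 -> meq x y -> x = y.
Proof.
  intros H [k Hk]. assert (k = 0%Z) by (apply int_small; apply Rabs_def2 in H; lra). subst k. simpl in Hk. lra.
Qed.
Lemma frac_of_eqm x y : 0 <= y < 1 -> meq x y -> frac_part x = y.
Proof. intros Hy H. apply meq_unit; [apply frac_range|auto|]. eapply meq_trans; [apply frac_eqm|auto]. Qed.
Lemma frac_unit t : 0 <= t < 1 -> frac_part t = t.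
Proof. intros H. apply frac_of_eqm; auto. apply meq_refl. Qed.

Definition near e x y := exists z, Rabs z < e /\ meq x (y + z).

Lemma near_distT e x y : 0 < e <= 1/2 -> near e x y -> distT x y < e.
Proof.
  intros He [z [Hz Hxy]]. unfold distT.
  destruct (Rle_lt_dec 0 z) as [Hp|Hn].
  - rewrite Rabs_right in Hz by lra.
    assert (frac_part (x - y) = z).
    { apply frac_of_eqm; [lra|]. destruct Hxy as [k Hk]. exists k. lra. }
    eapply Rle_lt_trans; [apply Rmin_l|]. lra.
  - rewrite Rabs_left in Hz by lra.
    assert (frac_part (y - x) = - z).
    { apply frac_of_eqm; [lra|]. destruct Hxy as [k Hk]. exists (-k)%Z. rewrite opp_IZR. lra. }
    eapply Rle_lt_trans; [apply Rmin_r|]. lra.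
Qed.

Lemma distT_near e x y : distT x y < e -> near e x y.
Proof.
  unfold distT, Rmin. destruct (Rle_dec _ _) as [H|H]; intro Hd.
  - exists (frac_part (x - y)). pose proof (frac_range (x-y)). split.
    + rewrite Rabs_right; lra.
    + destruct (frac_eqm (x - y)) as [k Hk]. exists (-k)%Z. rewrite opp_IZR. lra.
  - exists (- frac_part (y - x)). pose proof (frac_range (y-x)). split.
    + rewrite Rabs_left1; lra.
    + destruct (frac_eqm (y - x)) as [k Hk]. exists k. lra.
Qed.

Lemma Mat_eq (a b c d a' b' c' d' : Z) : a = a' -> b = b' -> c = c' -> d = d' ->
  mkMat2 a b c d = mkMat2 a' b' c' d'.
Proof. intros; subst; auto. Qed.

Lemma Mmul_assoc X Y Z0 : Mmul X (Mmul Y Z0) = Mmul (Mmul X Y) Z0.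
Proof. destruct X, Y, Z0; unfold Mmul; cbn -[Z.mul Z.add Z.sub Z.opp]; apply Mat_eq; ring. Qed.
Lemma Mmul_id_l X : Mmul Mid X = X.
Proof. destruct X; unfold Mmul, Mid; cbn -[Z.mul Z.add Z.sub Z.opp]; apply Mat_eq; ring. Qed.
Lemma Mmul_id_r X : Mmul X Mid = X.
Proof. destruct X; unfold Mmul, Mid; cbn -[Z.mul Z.add Z.sub Z.opp]; apply Mat_eq; ring. Qed.
Lemma Mdet_mul X Y : Mdet (Mmul X Y) = (Mdet X * Mdet Y)%Z.
Proof. destruct X, Y; unfold Mmul, Mdet; cbn -[Z.mul Z.add Z.sub Z.opp]; ring. Qed.

Lemma Minv_l X : inGL2Z X -> Mmul (Minv X) X = Mid.
Proof.
  destruct X as [a b c d]; unfold inGL2Z, Minv, Mmul, Mdet, Mid; cbn -[Z.mul Z.add Z.sub Z.opp].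
  intros [H|H]; rewrite H; apply Mat_eq; nia.
Qed.
Lemma Minv_r X : inGL2Z X -> Mmul X (Minv X) = Mid.
Proof.
  destruct X as [a b c d]; unfold inGL2Z, Minv, Mmul, Mdet, Mid; cbn -[Z.mul Z.add Z.sub Z.opp].
  intros [H|H]; rewrite H; apply Mat_eq; nia.
Qed.
Lemma Mdet_inv X : inGL2Z X -> Mdet (Minv X) = Mdet X.
Proof.
  destruct X as [a b c d]; unfold inGL2Z, Minv, Mdet; cbn -[Z.mul Z.add Z.sub Z.opp].
  intros [H|H]; rewrite H; nia.
Qed.
Lemma inGL_inv X : inGL2Z X -> inGL2Z (Minv X).
Proof. intros H. unfold inGL2Z. rewrite Mdet_inv; auto. Qed.
Lemma inGL_mul X Y : inGL2Z X -> inGL2Z Y -> inGL2Z (Mmul X Y).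
Proof. unfold inGL2Z. rewrite Mdet_mul. intros [H|H] [H'|H']; rewrite H, H'; auto. Qed.

Lemma inv_unique X Y : inGL2Z X -> Mmul X Y = Mid -> Y = Minv X.
Proof.
  intros HX H. rewrite <- (Mmul_id_l Y), <- (Minv_l X HX), <- Mmul_assoc, H, Mmul_id_r. auto.
Qed.
Lemma Minv_inv X : inGL2Z X -> Minv (Minv X) = X.
Proof. intros H. symmetry. apply inv_unique. apply inGL_inv; auto. apply Minv_l; auto. Qed.

Lemma Mpow_conj C X n : inGL2Z C ->
  Mpow (Mmul (Minv C) (Mmul X C)) n = Mmul (Minv C) (Mmul (Mpow X n) C).
Proof.
  intros HC. induction n; simpl.
  - rewrite Mmul_id_l. symmetry. apply Minv_l; auto.
  - rewrite IHn.
    rewrite !Mmul_assoc. f_equal. rewrite <- !Mmul_assoc. f_equal. f_equal.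
    rewrite (Mmul_assoc C (Minv C)), Minv_r, Mmul_id_l; auto.
Qed.

Lemma cancel_mid X Y Z0 : inGL2Z Y -> Mmul (Mmul X Y) (Mmul (Minv Y) Z0) = Mmul X Z0.
Proof.
  intros H. rewrite <- Mmul_assoc, (Mmul_assoc Y), Minv_r, Mmul_id_l; auto.
Qed.

Lemma Minv_conj A C : inGL2Z A -> inGL2Z C ->
  Minv (Mmul (Minv C) (Mmul A C)) = Mmul (Minv C) (Mmul (Minv A) C).
Proof.
  intros HA HC. symmetry. apply inv_unique.
  - apply inGL_mul; [apply inGL_inv; auto|apply inGL_mul; auto].
  - rewrite (Mmul_assoc (Minv C) A C), cancel_mid, cancel_mid, Minv_l; auto.
Qed.

Lemma Mzpow_conj A C m : inGL2Z A -> inGL2Z C ->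
  Mzpow (Mmul (Minv C) (Mmul A C)) m = Mmul (Minv C) (Mmul (Mzpow A m) C).
Proof.
  intros HA HC. unfold Mzpow. destruct (0 <=? m)%Z.
  - apply Mpow_conj; auto.
  - rewrite Minv_conj; auto. apply Mpow_conj; auto.
Qed.

Lemma Mzpow_opp B m : inGL2Z B -> Mzpow B (- m) = Mzpow (Minv B) m.
Proof.
  intros HB. unfold Mzpow.
  destruct (Z.leb_spec 0 (-m)); destruct (Z.leb_spec 0 m).
  - assert (m = 0%Z) by lia. subst. reflexivity.
  - rewrite Minv_inv; auto.
  - rewrite Z.opp_involutive. reflexivity.
  - lia.
Qed.

Lemma Mzpow_0 A : Mzpow A 0 = Mid. Proof. reflexivity. Qed.
Lemma Mzpow_1 A : Mzpow A 1 = A. Proof. unfold Mzpow; simpl. apply Mmul_id_r. Qed.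
Lemma Mzpow_m1 A : Mzpow A (-1) = Minv A. Proof. unfold Mzpow; simpl. apply Mmul_id_r. Qed.

Definition lin1 (M : Mat2) (t1 t2 : R) : R := IZR (m11 M) * t1 + IZR (m12 M) * t2.
Definition lin2 (M : Mat2) (t1 t2 : R) : R := IZR (m21 M) * t1 + IZR (m22 M) * t2.

Lemma lin1_eqm M t1 t2 s1 s2 : meq t1 s1 -> meq t2 s2 -> meq (lin1 M t1 t2) (lin1 M s1 s2).
Proof. intros H1 H2. unfold lin1. apply meq_add; apply meq_zmul; auto. Qed.
Lemma lin2_eqm M t1 t2 s1 s2 : meq t1 s1 -> meq t2 s2 -> meq (lin2 M t1 t2) (lin2 M s1 s2).
Proof. intros H1 H2. unfold lin2. apply meq_add; apply meq_zmul; auto. Qed.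
Lemma lin1_mul M N t1 t2 : lin1 (Mmul M N) t1 t2 = lin1 M (lin1 N t1 t2) (lin2 N t1 t2).
Proof. destruct M, N; unfold lin1, lin2, Mmul; simpl; rewrite !plus_IZR, !mult_IZR; ring. Qed.
Lemma lin2_mul M N t1 t2 : lin2 (Mmul M N) t1 t2 = lin2 M (lin1 N t1 t2) (lin2 N t1 t2).
Proof. destruct M, N; unfold lin1, lin2, Mmul; simpl; rewrite !plus_IZR, !mult_IZR; ring. Qed.
Lemma lin1_id t1 t2 : lin1 Mid t1 t2 = t1. Proof. unfold lin1, Mid; simpl. ring. Qed.
Lemma lin2_id t1 t2 : lin2 Mid t1 t2 = t2. Proof. unfold lin2, Mid; simpl. ring. Qed.
Lemma lin1_add M a b c d : lin1 M (a + c) (b + d) = lin1 M a b + lin1 M c d.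
Proof. unfold lin1; ring. Qed.
Lemma lin2_add M a b c d : lin2 M (a + c) (b + d) = lin2 M a b + lin2 M c d.
Proof. unfold lin2; ring. Qed.
Lemma lin1_0 M : lin1 M 0 0 = 0. Proof. unfold lin1; ring. Qed.
Lemma lin2_0 M : lin2 M 0 0 = 0. Proof. unfold lin2; ring. Qed.

Lemma int_zero_of_small (p : Z) : (forall t, 0 <= t < 1 -> meq (IZR p * t) 0) -> p = 0%Z.
Proof.
  intros H. set (t := / (2 * (Rabs (IZR p) + 1))).
  assert (Hpos : 0 < Rabs (IZR p) + 1) by (pose proof (Rabs_pos (IZR p)); lra).
  assert (Ht : 0 < t) by (unfold t; apply Rinv_0_lt_compat; lra).
  assert (Ht1 : t * (2 * (Rabs (IZR p) + 1)) = 1) by (unfold t; field; lra).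
  assert (Hb : Rabs (IZR p * t) < 1).
  { rewrite Rabs_mult, (Rabs_right t) by lra. nra. }
  assert (Ht01 : 0 <= t < 1).
  { split; [lra|]. pose proof (Rabs_pos (IZR p)). nra. }
  destruct (H t Ht01) as [k Hk].
  assert (IZR p * t = 0) by (apply meq_small; [rewrite Rminus_0_r; auto| exists k; auto]).
  apply eq_IZR. simpl. apply Rmult_integral in H0. destruct H0; auto. lra.
Qed.

Lemma mat_of_lin M N :
  (forall t1 t2, 0 <= t1 < 1 -> 0 <= t2 < 1 ->
     meq (lin1 M t1 t2) (lin1 N t1 t2) /\ meq (lin2 M t1 t2) (lin2 N t1 t2)) -> M = N.
Proof.
  intros H. destruct M as [a b c d], N as [a' b' c' d']. unfold lin1, lin2 in H; simpl in H.
  assert (R0 : 0 <= 0 < 1) by lra.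
  apply Mat_eq; apply Zminus_eq; apply int_zero_of_small; intros t Ht; rewrite minus_IZR.
  - destruct (H t 0 Ht R0) as [[k Hk] _]. exists k. nra.
  - destruct (H 0 t R0 Ht) as [[k Hk] _]. exists k. nra.
  - destruct (H t 0 Ht R0) as [_ [k Hk]]. exists k. nra.
  - destruct (H 0 t R0 Ht) as [_ [k Hk]]. exists k. nra.
Qed.

Definition sc1 (x : SD) : R := proj1_sig (fst (fst x)).
Definition sc2 (x : SD) : R := proj1_sig (snd (fst x)).
Definition scm (x : SD) : Z := snd x.

Definition mkT (x : R) : Tt := exist _ (frac_part x) (frac_range x).
Definition pt (t1 t2 : R) (m : Z) : SD := ((mkT t1, mkT t2), m).

Lemma c1_pt t1 t2 m : sc1 (pt t1 t2 m) = frac_part t1. Proof. reflexivity. Qed.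
Lemma c2_pt t1 t2 m : sc2 (pt t1 t2 m) = frac_part t2. Proof. reflexivity. Qed.
Lemma cm_pt t1 t2 m : scm (pt t1 t2 m) = m. Proof. reflexivity. Qed.
Lemma c1_range x : 0 <= sc1 x < 1. Proof. exact (proj2_sig (fst (fst x))). Qed.
Lemma c2_range x : 0 <= sc2 x < 1. Proof. exact (proj2_sig (snd (fst x))). Qed.

Lemma Tt_eq (a b : Tt) : proj1_sig a = proj1_sig b -> a = b.
Proof. destruct a, b; simpl; intros ->; f_equal; apply proof_irrelevance. Qed.
Lemma SD_eq x y : sc1 x = sc1 y -> sc2 x = sc2 y -> scm x = scm y -> x = y.
Proof.
  destruct x as [[a b] m], y as [[a' b'] m']; unfold sc1, sc2, scm; simpl; intros H1 H2 H3.
  rewrite (Tt_eq a a'), (Tt_eq b b'); auto. subst; auto.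
Qed.
Lemma pt_eta x : pt (sc1 x) (sc2 x) (scm x) = x.
Proof. apply SD_eq; rewrite ?c1_pt, ?c2_pt, ?cm_pt; auto; apply frac_unit; auto using c1_range, c2_range. Qed.
Lemma pt_meq t1 t2 s1 s2 m : meq t1 s1 -> meq t2 s2 -> pt t1 t2 m = pt s1 s2 m.
Proof.
  intros H1 H2. apply SD_eq; rewrite ?c1_pt, ?c2_pt; auto; apply frac_of_eqm; auto using frac_range.
  - eapply meq_trans; [exact H1|]. apply meq_sym, frac_eqm.
  - eapply meq_trans; [exact H2|]. apply meq_sym, frac_eqm.
Qed.
Lemma c1_pt0 m : sc1 (pt 0 0 m) = 0. Proof. rewrite c1_pt. apply frac_unit. lra. Qed.
Lemma c2_pt0 m : sc2 (pt 0 0 m) = 0. Proof. rewrite c2_pt. apply frac_unit. lra. Qed.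
Lemma c1_pt_meq t1 t2 m : meq (sc1 (pt t1 t2 m)) t1. Proof. apply frac_eqm. Qed.
Lemma c2_pt_meq t1 t2 m : meq (sc2 (pt t1 t2 m)) t2. Proof. apply frac_eqm. Qed.

Lemma SDmul_iff A x y z : SDmul A x y z <->
  scm z = (scm x + scm y)%Z /\
  meq (sc1 z) (sc1 x + lin1 (Mzpow A (scm x)) (sc1 y) (sc2 y)) /\
  meq (sc2 z) (sc2 x + lin2 (Mzpow A (scm x)) (sc1 y) (sc2 y)).
Proof.
  destruct x as [[a1 a2] m], y as [[b1 b2] n], z as [[e1 e2] k].
  unfold SDmul, sc1, sc2, scm, psi1, psi2; simpl. fold (lin1 (Mzpow A m) (proj1_sig b1) (proj1_sig b2)).
  fold (lin2 (Mzpow A m) (proj1_sig b1) (proj1_sig b2)).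
  split.
  - intros [H1 [H2 H3]]. split; auto. split.
    + rewrite H2. eapply meq_trans; [apply frac_eqm|]. apply meq_add; [apply meq_refl|apply frac_eqm].
    + rewrite H3. eapply meq_trans; [apply frac_eqm|]. apply meq_add; [apply meq_refl|apply frac_eqm].
  - intros [H1 [H2 H3]]. split; auto. split.
    + symmetry. apply frac_of_eqm. exact (proj2_sig e1). apply meq_sym. eapply meq_trans; [exact H2|].
      apply meq_add; [apply meq_refl|apply meq_sym, frac_eqm].
    + symmetry. apply frac_of_eqm. exact (proj2_sig e2). apply meq_sym. eapply meq_trans; [exact H3|].
      apply meq_add; [apply meq_refl|apply meq_sym, frac_eqm].
Qed.

Lemma SD_total A : forall a b, exists c, SDmul A a b c.
Proof.
  intros x y. exists (pt (sc1 x + lin1 (Mzpow A (scm x)) (sc1 y) (sc2 y)) (sc2 x + lin2 (Mzpow A (scm x)) (sc1 y) (sc2 y)) (scm x + scm y)).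
  apply SDmul_iff. rewrite cm_pt. split; auto. split; apply frac_eqm.
Qed.

Lemma SD_fun A : forall a b c c', SDmul A a b c -> SDmul A a b c' -> c = c'.
Proof.
  intros x y z z' H H'. apply SDmul_iff in H. apply SDmul_iff in H'.
  destruct H as [Hm [H1 H2]], H' as [Hm' [H1' H2']]. apply SD_eq.
  - apply meq_unit; auto using c1_range. eapply meq_trans; [exact H1|apply meq_sym; exact H1'].
  - apply meq_unit; auto using c2_range. eapply meq_trans; [exact H2|apply meq_sym; exact H2'].
  - congruence.
Qed.

Definition Pm (D : Mat2) (s : Z) (x : SD) : SD :=
  pt (lin1 D (sc1 x) (sc2 x)) (lin2 D (sc1 x) (sc2 x)) (s * scm x).

Lemma lin1_c M x : meq (lin1 M (sc1 x) (sc2 x)) (lin1 M (sc1 x) (sc2 x)). Proof. apply meq_refl. Qed.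

Lemma scm_P D s x : scm (Pm D s x) = (s * scm x)%Z. Proof. reflexivity. Qed.
Lemma sc1_P D s x : meq (sc1 (Pm D s x)) (lin1 D (sc1 x) (sc2 x)). Proof. apply c1_pt_meq. Qed.
Lemma sc2_P D s x : meq (sc2 (Pm D s x)) (lin2 D (sc1 x) (sc2 x)). Proof. apply c2_pt_meq. Qed.

Lemma P_inv D E s x : Mmul E D = Mid -> (s * s = 1)%Z -> Pm E s (Pm D s x) = x.
Proof.
  intros HED Hs. unfold Pm at 1. apply SD_eq.
  - rewrite c1_pt. apply frac_of_eqm; [apply c1_range|].
    eapply meq_trans; [apply lin1_eqm; [apply c1_pt_meq|apply c2_pt_meq]|].
    rewrite <- lin1_mul, HED, lin1_id. apply meq_refl.
  - rewrite c2_pt. apply frac_of_eqm; [apply c2_range|].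
    eapply meq_trans; [apply lin2_eqm; [apply c1_pt_meq|apply c2_pt_meq]|].
    rewrite <- lin2_mul, HED, lin2_id. apply meq_refl.
  - unfold Pm. rewrite !cm_pt. rewrite Z.mul_assoc, Hs. ring.
Qed.

Lemma P_hom A B D s x y z :
  (forall m, Mmul D (Mzpow A m) = Mmul (Mzpow B (s * m)) D) ->
  SDmul A x y z -> SDmul B (Pm D s x) (Pm D s y) (Pm D s z).
Proof.
  intros Hc H. apply SDmul_iff in H. destruct H as [Hm [H1 H2]].
  apply SDmul_iff. rewrite !scm_P. split; [rewrite Hm; ring|].
  specialize (Hc (scm x)).
  split.
  - eapply meq_trans; [apply sc1_P|].
    eapply meq_trans; [apply lin1_eqm; [exact H1|exact H2]|].
    rewrite lin1_add, <- lin1_mul, Hc, lin1_mul.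
    apply meq_add; [apply meq_sym, sc1_P|].
    apply lin1_eqm; apply meq_sym; [apply sc1_P|apply sc2_P].
  - eapply meq_trans; [apply sc2_P|].
    eapply meq_trans; [apply lin2_eqm; [exact H1|exact H2]|].
    rewrite lin2_add, <- lin2_mul, Hc, lin2_mul.
    apply meq_add; [apply meq_sym, sc2_P|].
    apply lin2_eqm; apply meq_sym; [apply sc1_P|apply sc2_P].
Qed.

Lemma lin_bound (a b z1 z2 dl : R) :
  Rabs z1 < dl -> Rabs z2 < dl ->
  Rabs (a * z1 + b * z2) <= (Rabs a + Rabs b) * dl.
Proof.
  intros H1 H2. eapply Rle_trans; [apply Rabs_triang|]. rewrite !Rabs_mult.
  pose proof (Rabs_pos a). pose proof (Rabs_pos b). nra.
Qed.

Lemma P_cont D s U : SDopen U -> SDopen (fun x => U (Pm D s x)).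
Proof.
  intros HU x Hx. destruct (HU _ Hx) as [eps [Heps Hp]].
  set (e := Rmin eps (1/2)).
  assert (He : 0 < e <= 1/2) by (unfold e, Rmin; destruct (Rle_dec _ _); lra).
  assert (Hee : e <= eps) by apply Rmin_l.
  set (K := Rabs (IZR (m11 D)) + Rabs (IZR (m12 D)) + Rabs (IZR (m21 D)) + Rabs (IZR (m22 D)) + 1).
  assert (HK : 1 <= K).
  { unfold K. pose proof (Rabs_pos (IZR (m11 D))). pose proof (Rabs_pos (IZR (m12 D))).
    pose proof (Rabs_pos (IZR (m21 D))). pose proof (Rabs_pos (IZR (m22 D))). lra. }
  set (dl := e / K).
  assert (Hdl : 0 < dl) by (unfold dl; apply Rdiv_lt_0_compat; lra).
  assert (HKd : K * dl = e) by (unfold dl; field; lra).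
  assert (Hdle : dl <= 1/2) by nra.
  exists dl. split; auto. intros y Hy Hd1 Hd2.
  apply distT_near in Hd1. apply distT_near in Hd2.
  destruct Hd1 as [z1 [Hz1 Hy1]], Hd2 as [z2 [Hz2 Hy2]].
  apply Hp.
  - unfold Pm, pt. simpl. change (snd y) with (scm y). change (snd x) with (scm x).
    unfold scm in *. rewrite Hy. auto.
  - change (proj1_sig (fst (fst (Pm D s y)))) with (sc1 (Pm D s y)).
    change (proj1_sig (fst (fst (Pm D s x)))) with (sc1 (Pm D s x)).
    apply Rlt_le_trans with e; auto. apply near_distT; auto.
    exists (lin1 D z1 z2). split.
    + eapply Rle_lt_trans; [apply lin_bound; eauto|].
      unfold K in HKd. pose proof (Rabs_pos (IZR (m21 D))). pose proof (Rabs_pos (IZR (m22 D))). nra.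
    + unfold Pm. eapply meq_trans; [apply c1_pt_meq|].
      eapply meq_trans; [apply lin1_eqm; [exact Hy1|exact Hy2]|].
      rewrite lin1_add. apply meq_add; [apply meq_sym, c1_pt_meq|apply meq_refl].
  - change (proj1_sig (snd (fst (Pm D s y)))) with (sc2 (Pm D s y)).
    change (proj1_sig (snd (fst (Pm D s x)))) with (sc2 (Pm D s x)).
    apply Rlt_le_trans with e; auto. apply near_distT; auto.
    exists (lin2 D z1 z2). split.
    + eapply Rle_lt_trans; [apply lin_bound; eauto|].
      unfold K in HKd. pose proof (Rabs_pos (IZR (m11 D))). pose proof (Rabs_pos (IZR (m12 D))). nra.
    + unfold Pm. eapply meq_trans; [apply c2_pt_meq|].
      eapply meq_trans; [apply lin2_eqm; [exact Hy1|exact Hy2]|].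
      rewrite lin2_add. apply meq_add; [apply meq_sym, c2_pt_meq|apply meq_refl].
Qed.

Lemma P_iso A B D E s :
  Mmul E D = Mid -> Mmul D E = Mid -> (s * s = 1)%Z ->
  (forall m, Mmul D (Mzpow A m) = Mmul (Mzpow B (s * m)) D) ->
  is_topgrp_iso (SDmul A) SDopen (SDmul B) SDopen (Pm D s).
Proof.
  intros HED HDE Hs Hc.
  split; [|split;[|split;[|split]]].
  - intros a b H. rewrite <- (P_inv D E s a), <- (P_inv D E s b), H; auto.
  - intro y. exists (Pm E s y). apply P_inv; auto.
  - intros a b c H. apply (P_hom A B); auto.
  - intros U HU. apply P_cont; auto.
  - intros V HV.
    replace (fun y => exists x, V x /\ Pm D s x = y) with (fun y => V (Pm E s y)).
    + apply P_cont; auto.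
    + apply pred_ext; intro y; split.
      * intros H. exists (Pm E s y). split; auto. apply P_inv; auto.
      * intros [x [Hx <-]]. rewrite P_inv; auto.
Qed.

Lemma lin1D (g : R -> R) :
  (forall s t, meq (g (s+t)) (g s + g t)) ->
  meq (g 1) 0 ->
  (forall e, 0 < e -> e <= 1/2 -> exists d, 0 < d /\ forall t, Rabs t < d -> near e (g t) 0) ->
  exists a : Z, forall t, meq (g t) (IZR a * t).
Proof.
  intros Hadd H1 Hc.
  set (L := fun t => frac_part (g t + 1/2) - 1/2).
  assert (HLm : forall t, meq (L t) (g t)).
  { intro t. unfold L. destruct (frac_eqm (g t + 1/2)) as [k Hk]. exists k. lra. }
  assert (HLu : forall t z, -1/2 <= z < 1/2 -> meq (g t) z -> L t = z).
  { intros t z Hz Hg. unfold L. rewrite (frac_of_eqm (g t + 1/2) (z + 1/2)). lra. lra.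
    apply meq_add; auto. apply meq_refl. }
  assert (Hg0 : meq (g 0) 0).
  { pose proof (Hadd 0 0) as H. rewrite Rplus_0_r in H.
    apply meq_sym. apply (meq_cancel_l (g 0)). rewrite Rplus_0_r. exact H. }
  assert (HgN : forall n t, meq (g (INR n * t)) (INR n * g t)).
  { induction n; intro t.
    - simpl. rewrite !Rmult_0_l. auto.
    - rewrite S_INR. replace ((INR n + 1) * t) with (INR n * t + t) by ring.
      eapply meq_trans; [apply Hadd|]. replace ((INR n + 1) * g t) with (INR n * g t + g t) by ring.
      apply meq_add; auto. apply meq_refl. }
  destruct (Hc (1/8)) as [dl [Hdl Hd]]; try lra.
  assert (HLs : forall t, Rabs t < dl -> Rabs (L t) < 1/8).
  { intros t Ht. destruct (Hd t Ht) as [z [Hz Hgz]]. rewrite Rplus_0_l in Hgz.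
    rewrite (HLu t z); auto. apply Rabs_def2 in Hz. lra. }
  assert (HLadd : forall s t, Rabs s < dl -> Rabs t < dl -> Rabs (s+t) < dl -> L (s+t) = L s + L t).
  { intros s t Hs Ht Hst. apply HLu.
    - pose proof (HLs s Hs) as A1. pose proof (HLs t Ht) as A2.
      apply Rabs_def2 in A1. apply Rabs_def2 in A2. lra.
    - eapply meq_trans; [apply Hadd|]. apply meq_add; apply meq_sym; auto. }
  assert (HL0 : L 0 = 0) by (apply HLu; auto; lra).
  assert (HLn : forall n t, 0 <= t -> INR n * t < dl -> L (INR n * t) = INR n * L t).
  { induction n; intros t Ht0 Ht.
    - simpl. rewrite !Rmult_0_l. auto.
    - rewrite S_INR in *. replace ((INR n + 1) * t) with (INR n * t + t) by ring.
      pose proof (pos_INR n).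
      assert (0 <= INR n * t) by nra.
      rewrite HLadd; try (rewrite Rabs_right; nra).
      rewrite IHn by nra. ring. }
  destruct (archimed_cor1 dl Hdl) as [N [HN HN0]].
  assert (HNp : 0 < INR N) by (apply lt_0_INR; auto).
  assert (HN1 : 1 <= INR N) by (apply (le_INR 1); lia).
  set (q := / INR N).
  assert (Hq : 0 < q) by (unfold q; apply Rinv_0_lt_compat; auto).
  assert (HNq : INR N * q = 1) by (unfold q; field; lra).
  assert (Hq1 : q <= 1) by nra.
  assert (Hqd : q < dl) by (unfold q; lra).
  assert (Ha : meq (INR N * L q) 0).
  { eapply meq_trans; [apply meq_nmul; apply HLm|]. eapply meq_trans; [apply meq_sym; apply HgN|].
    rewrite HNq. auto. }
  destruct Ha as [a Ha]. rewrite Rplus_0_l in Ha.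
  exists a.
  assert (HLq : L q = IZR a * q).
  { rewrite <- Ha. replace (INR N * L q * q) with (L q * (INR N * q)) by ring. rewrite HNq. ring. }
  assert (HLpos : forall t, 0 <= t < dl -> L t = IZR a * t).
  { intros t Ht.
    assert (Hall : forall e, 0 < e -> Rabs (L t - IZR a * t) < e).
    { intros e He.
      set (e' := Rmin (e/2) (1/2)).
      assert (He' : 0 < e' <= 1/2) by (unfold e', Rmin; destruct (Rle_dec _ _); lra).
      assert (He'2 : e' <= e/2) by apply Rmin_l.
      destruct (Hc e' (proj1 He') (proj2 He')) as [d [Hd0 Hdd]].
      set (Ka := Rabs (IZR a) + 1).
      assert (HKa : 1 <= Ka) by (unfold Ka; pose proof (Rabs_pos (IZR a)); lra).
      assert (Hm0 : 0 < Rmin d (e / (2 * Ka))).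
      { unfold Rmin; destruct (Rle_dec _ _); auto. apply Rdiv_lt_0_compat; lra. }
      destruct (archimed_cor1 _ Hm0) as [M [HM HM0]].
      assert (HMp : 0 < INR M) by (apply lt_0_INR; auto).
      assert (HM1 : 1 <= INR M) by (apply (le_INR 1); lia).
      set (w := q / INR M).
      assert (Hw0 : 0 < w) by (unfold w; apply Rdiv_lt_0_compat; auto).
      assert (HMw : INR M * w = q) by (unfold w; field; lra).
      assert (Hwle : w <= / INR M).
      { unfold w. unfold Rdiv. rewrite Rmult_comm. pose proof (Rinv_0_lt_compat _ HMp). nra. }
      assert (Hwd : w < d) by (pose proof (Rmin_l d (e / (2 * Ka))); lra).
      assert (Hwe : w < e / (2 * Ka)) by (pose proof (Rmin_r d (e / (2 * Ka))); lra).
      assert (Hwq : w <= q) by nra.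
      assert (HLw : L w = IZR a * w).
      { assert (L (INR M * w) = INR M * L w) by (apply HLn; lra).
        rewrite HMw, HLq in H. rewrite <- HMw in H. nra. }
      destruct (base_Int_part (t / w)) as [Hj1 Hj2].
      set (j := Int_part (t / w)) in *.
      assert (Htw : 0 <= t / w) by (unfold Rdiv; apply Rmult_le_pos; [lra| left; apply Rinv_0_lt_compat; lra]).
      assert (Hj0 : (0 <= j)%Z).
      { assert (Hm1 : IZR (-1) < IZR j) by lra. apply lt_IZR in Hm1. lia. }
      set (r := IZR j * w).
      assert (Hr1 : r <= t).
      { unfold r. assert (IZR j * w <= t / w * w) by (apply Rmult_le_compat_r; lra).
        replace (t / w * w) with t in H by (field; lra). auto. }
      assert (Hr2 : t < r + w).
      { unfold r. assert (t / w * w < (IZR j + 1) * w) by (apply Rmult_lt_compat_r; lra).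
        replace (t / w * w) with t in H by (field; lra). lra. }
      assert (Hr0 : 0 <= r) by (unfold r; apply Rmult_le_pos; [apply IZR_le; auto|lra]).
      assert (HLr : L r = IZR a * r).
      { assert (Hn : INR (Z.to_nat j) = IZR j) by (rewrite INR_IZR_INZ, Z2Nat.id; auto).
        unfold r. rewrite <- Hn. rewrite HLn; try lra. rewrite HLw. ring.
        rewrite Hn. fold r. lra. }
      set (u := t - r).
      assert (Hu : 0 <= u < w) by (unfold u; lra).
      assert (HLt : L t = L r + L u).
      { replace t with (r + u) at 1 by (unfold u; ring). apply HLadd.
        - rewrite Rabs_right; lra.
        - rewrite Rabs_right; lra.
        - unfold u. replace (r + (t - r)) with t by ring. rewrite Rabs_right; lra. }
      assert (HLu' : Rabs (L u) < e').
      { destruct (Hdd u) as [z [Hz Hgz]]. rewrite Rabs_right; lra.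
        rewrite Rplus_0_l in Hgz. rewrite (HLu u z); auto. apply Rabs_def2 in Hz. lra. }
      replace (L t - IZR a * t) with (L u - IZR a * u) by (rewrite HLt, HLr; unfold u; ring).
      eapply Rle_lt_trans; [apply Rabs_triang|]. rewrite Rabs_Ropp, Rabs_mult, (Rabs_right u) by lra.
      assert (Rabs (IZR a) * u <= Rabs (IZR a) * w) by (apply Rmult_le_compat_l; [apply Rabs_pos|lra]).
      assert (Rabs (IZR a) * w < e / 2).
      { assert (HH : Ka * w < Ka * (e / (2 * Ka))) by (apply Rmult_lt_compat_l; lra).
        replace (Ka * (e / (2 * Ka))) with (e/2) in HH by (field; lra).
        unfold Ka in HH. lra. }
      lra. }
    destruct (Req_dec (L t - IZR a * t) 0) as [H0|H0]; [lra|].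
    exfalso. specialize (Hall (Rabs (L t - IZR a * t)) (Rabs_pos_lt _ H0)). lra. }
  assert (HLall : forall t, Rabs t < dl -> L t = IZR a * t).
  { intros t Ht. destruct (Rle_lt_dec 0 t).
    - apply HLpos. rewrite Rabs_right in Ht; lra.
    - rewrite Rabs_left in Ht by lra.
      assert (HLt : L (t + - t) = L t + L (- t)).
      { apply HLadd.
        - rewrite Rabs_left; lra.
        - rewrite Rabs_right; lra.
        - replace (t + - t) with 0 by ring. rewrite Rabs_R0. lra. }
      replace (t + - t) with 0 in HLt by ring. rewrite HL0, (HLpos (-t)) in HLt by lra. lra. }
  intro t.
  assert (Hm0 : 0 < dl / (Rabs t + 1)) by (apply Rdiv_lt_0_compat; auto; pose proof (Rabs_pos t); lra).
  destruct (archimed_cor1 _ Hm0) as [n [Hn Hn0]].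
  assert (Hnp : 0 < INR n) by (apply lt_0_INR; auto).
  set (u := t / INR n).
  assert (Hu : Rabs u < dl).
  { unfold u, Rdiv. rewrite Rabs_mult, (Rabs_right (/ INR n)) by (left; apply Rinv_0_lt_compat; auto).
    pose proof (Rabs_pos t).
    assert (/ INR n * (Rabs t + 1) < dl) by (apply (Rmult_lt_compat_r (Rabs t + 1)) in Hn; [|lra];
       replace (dl / (Rabs t + 1) * (Rabs t + 1)) with dl in Hn by (field; lra); auto).
    pose proof (Rinv_0_lt_compat _ Hnp). nra. }
  replace t with (INR n * u) at 1 by (unfold u; field; lra).
  eapply meq_trans; [apply HgN|]. eapply meq_trans; [apply meq_nmul; apply meq_sym; apply HLm|].
  rewrite HLall; auto. apply meq_eq. unfold u. field. lra.
Qed.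

Fixpoint Dk (A : Mat2) (k : nat) (x : SD) : Prop :=
  match k with O => True | S k' => exists y, SDmul A y y x /\ Dk A k' y end.

Lemma Dk_of_zero A k x : scm x = 0%Z -> Dk A k x.
Proof.
  revert x; induction k; intros x H; simpl; auto.
  exists (pt (sc1 x / 2) (sc2 x / 2) 0). split; [|apply IHk; reflexivity].
  apply SDmul_iff. rewrite cm_pt, Mzpow_0, lin1_id, lin2_id, H. split; auto.
  pose proof (c1_range x). pose proof (c2_range x).
  rewrite c1_pt, c2_pt, !frac_unit by lra. split; apply meq_eq; field.
Qed.

Lemma Dk_div A k x : Dk A k x -> exists q, scm x = (2 ^ (Z.of_nat k) * q)%Z.
Proof.
  revert x; induction k; intros x H; cbn [Dk] in H.
  - exists (scm x). simpl. destruct (scm x); reflexivity.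
  - destruct H as [y [Hy HD]]. apply SDmul_iff in Hy. destruct Hy as [Hm _].
    destruct (IHk y HD) as [q Hq]. exists q. rewrite Hm, Hq, Nat2Z.inj_succ, Z.pow_succ_r by lia. ring.
Qed.

Lemma zero_of_Dk A x : (forall k, Dk A k x) -> scm x = 0%Z.
Proof.
  intros H. set (m := scm x). destruct (Dk_div A (Z.to_nat (Z.abs m)) x (H _)) as [q Hq].
  rewrite Z2Nat.id in Hq by lia. fold m in Hq.
  pose proof (Z.pow_gt_lin_r 2 (Z.abs m) ltac:(lia) ltac:(lia)) as Hp.
  destruct (Z.eq_dec q 0) as [->|Hq0]; [lia|].
  exfalso. set (P := (2 ^ Z.abs m)%Z) in *.
  assert (Z.abs m = P * Z.abs q)%Z by (rewrite Hq, Z.abs_mul, (Z.abs_eq P); lia).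
  nia.
Qed.

Section Hard.
Variables (A B : Mat2) (K : SD -> SD).
Hypothesis HK : is_topgrp_iso (SDmul A) SDopen (SDmul B) SDopen K.

Lemma K_hom : forall a b c, SDmul A a b c -> SDmul B (K a) (K b) (K c).
Proof. destruct HK as [_ [_ [H _]]]. exact H. Qed.

Lemma Dk_K k x : Dk A k x -> Dk B k (K x).
Proof.
  revert x; induction k; intros x; simpl; auto. intros [y [Hy HD]].
  exists (K y). split; [apply K_hom; auto| apply IHk; auto].
Qed.

Lemma K_T0 x : scm x = 0%Z -> scm (K x) = 0%Z.
Proof. intros H. apply (zero_of_Dk B). intro k. apply Dk_K. apply Dk_of_zero; auto. Qed.

Lemma K_add s1 s2 t1 t2 :
  meq (sc1 (K (pt (s1+t1) (s2+t2) 0))) (sc1 (K (pt s1 s2 0)) + sc1 (K (pt t1 t2 0))) /\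
  meq (sc2 (K (pt (s1+t1) (s2+t2) 0))) (sc2 (K (pt s1 s2 0)) + sc2 (K (pt t1 t2 0))).
Proof.
  assert (H : SDmul A (pt s1 s2 0) (pt t1 t2 0) (pt (s1+t1) (s2+t2) 0)).
  { apply SDmul_iff. rewrite !cm_pt, Mzpow_0, lin1_id, lin2_id. split; [reflexivity|]. split.
    - eapply meq_trans; [apply c1_pt_meq|]. apply meq_add; apply meq_sym; apply c1_pt_meq.
    - eapply meq_trans; [apply c2_pt_meq|]. apply meq_add; apply meq_sym; apply c2_pt_meq. }
  apply K_hom in H. apply SDmul_iff in H. destruct H as [_ [H1 H2]].
  rewrite K_T0 in H1, H2 by (rewrite cm_pt; reflexivity).
  rewrite Mzpow_0, lin1_id in H1. rewrite Mzpow_0, lin2_id in H2. auto.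
Qed.

Lemma K0 : sc1 (K (pt 0 0 0)) = 0 /\ sc2 (K (pt 0 0 0)) = 0.
Proof.
  destruct (K_add 0 0 0 0) as [H1 H2]. rewrite Rplus_0_r in H1, H2.
  split; apply meq_unit; auto using c1_range, c2_range; try lra.
  - apply (meq_cancel_l (sc1 (K (pt 0 0 0)))). rewrite Rplus_0_r. apply meq_sym. exact H1.
  - apply (meq_cancel_l (sc2 (K (pt 0 0 0)))). rewrite Rplus_0_r. apply meq_sym. exact H2.
Qed.

Lemma K_cont e : 0 < e -> e <= 1/2 -> exists d, 0 < d /\ forall t1 t2, Rabs t1 < d -> Rabs t2 < d ->
  near e (sc1 (K (pt t1 t2 0))) 0 /\ near e (sc2 (K (pt t1 t2 0))) 0.
Proof.
  intros He He2.
  set (U := fun y => scm y = 0%Z /\ near e (sc1 y) 0 /\ near e (sc2 y) 0).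
  assert (HU : SDopen U).
  { intros y [H0 [[z1 [Hz1 Hy1]] [z2 [Hz2 Hy2]]]].
    exists (Rmin (e - Rabs z1) (e - Rabs z2)). split.
    { unfold Rmin; destruct (Rle_dec _ _); lra. }
    intros y' Hs Hd1 Hd2.
    pose proof (Rmin_l (e - Rabs z1) (e - Rabs z2)). pose proof (Rmin_r (e - Rabs z1) (e - Rabs z2)).
    apply distT_near in Hd1. apply distT_near in Hd2.
    destruct Hd1 as [w1 [Hw1 Hy'1]], Hd2 as [w2 [Hw2 Hy'2]].
    split; [|split].
    - unfold scm in *. rewrite Hs. auto.
    - exists (z1 + w1). split.
      + eapply Rle_lt_trans; [apply Rabs_triang|]. lra.
      + change (proj1_sig (fst (fst y'))) with (sc1 y') in Hy'1.
        change (proj1_sig (fst (fst y))) with (sc1 y) in Hy'1.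
        eapply meq_trans; [exact Hy'1|]. rewrite Rplus_0_l in *.
        replace (z1 + w1) with (z1 + w1) by ring. apply meq_add; auto. apply meq_refl.
    - exists (z2 + w2). split.
      + eapply Rle_lt_trans; [apply Rabs_triang|]. lra.
      + change (proj1_sig (snd (fst y'))) with (sc2 y') in Hy'2.
        change (proj1_sig (snd (fst y))) with (sc2 y) in Hy'2.
        eapply meq_trans; [exact Hy'2|]. rewrite Rplus_0_l in *.
        apply meq_add; auto. apply meq_refl. }
  destruct HK as [_ [_ [_ [Hc _]]]].
  specialize (Hc U HU).
  assert (H0 : U (K (pt 0 0 0))).
  { destruct K0 as [k1 k2]. split; [apply K_T0; reflexivity|].
    split; exists 0; (split; [rewrite Rabs_R0; lra|]); rewrite ?k1, ?k2, Rplus_0_l; apply meq_refl. }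
  destruct (Hc _ H0) as [eps [Heps Hp]].
  exists (Rmin eps (1/2)). split. { unfold Rmin; destruct (Rle_dec _ _); lra. }
  pose proof (Rmin_l eps (1/2)). pose proof (Rmin_r eps (1/2)).
  assert (0 < Rmin eps (1/2)) by (unfold Rmin; destruct (Rle_dec _ _); lra).
  intros t1 t2 Ht1 Ht2.
  assert (HH : U (K (pt t1 t2 0))).
  { apply Hp.
    - reflexivity.
    - change (distT (sc1 (pt t1 t2 0)) (sc1 (pt 0 0 0)) < eps).
      rewrite c1_pt0. apply Rlt_le_trans with (Rmin eps (1/2)); auto.
      apply near_distT; [lra|]. exists t1. split; auto. rewrite Rplus_0_l. apply c1_pt_meq.
    - change (distT (sc2 (pt t1 t2 0)) (sc2 (pt 0 0 0)) < eps).
      rewrite c2_pt0. apply Rlt_le_trans with (Rmin eps (1/2)); auto.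
      apply near_distT; [lra|]. exists t2. split; auto. rewrite Rplus_0_l. apply c2_pt_meq. }
  destruct HH as [_ [Ha Hb]]. auto.
Qed.

Lemma K_matrix : exists C, forall t1 t2,
  meq (sc1 (K (pt t1 t2 0))) (lin1 C t1 t2) /\ meq (sc2 (K (pt t1 t2 0))) (lin2 C t1 t2).
Proof.
  assert (Hper : pt 1 0 0 = pt 0 0 0) by (apply pt_meq; [exists 1%Z; simpl; ring|apply meq_refl]).
  assert (Hper' : pt 0 1 0 = pt 0 0 0) by (apply pt_meq; [apply meq_refl|exists 1%Z; simpl; ring]).
  destruct K0 as [k1 k2].
  destruct (lin1D (fun t => sc1 (K (pt t 0 0)))) as [a11 Ha11].
  { intros s t. simpl. destruct (K_add s 0 t 0) as [H _]. rewrite Rplus_0_r in H. exact H. }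
  { simpl. rewrite Hper, k1. apply meq_refl. }
  { intros e He He2. destruct (K_cont e He He2) as [d [Hd Hc]]. exists d. split; auto.
    intros t Ht. apply Hc; auto. rewrite Rabs_R0; auto. }
  destruct (lin1D (fun t => sc1 (K (pt 0 t 0)))) as [a12 Ha12].
  { intros s t. simpl. destruct (K_add 0 s 0 t) as [H _]. rewrite Rplus_0_r in H. exact H. }
  { simpl. rewrite Hper', k1. apply meq_refl. }
  { intros e He He2. destruct (K_cont e He He2) as [d [Hd Hc]]. exists d. split; auto.
    intros t Ht. apply Hc; auto. rewrite Rabs_R0; auto. }
  destruct (lin1D (fun t => sc2 (K (pt t 0 0)))) as [a21 Ha21].
  { intros s t. simpl. destruct (K_add s 0 t 0) as [_ H]. rewrite Rplus_0_r in H. exact H. }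
  { simpl. rewrite Hper, k2. apply meq_refl. }
  { intros e He He2. destruct (K_cont e He He2) as [d [Hd Hc]]. exists d. split; auto.
    intros t Ht. apply Hc; auto. rewrite Rabs_R0; auto. }
  destruct (lin1D (fun t => sc2 (K (pt 0 t 0)))) as [a22 Ha22].
  { intros s t. simpl. destruct (K_add 0 s 0 t) as [_ H]. rewrite Rplus_0_r in H. exact H. }
  { simpl. rewrite Hper', k2. apply meq_refl. }
  { intros e He He2. destruct (K_cont e He He2) as [d [Hd Hc]]. exists d. split; auto.
    intros t Ht. apply Hc; auto. rewrite Rabs_R0; auto. }
  exists (mkMat2 a11 a12 a21 a22). intros t1 t2.
  destruct (K_add t1 0 0 t2) as [H1 H2]. rewrite Rplus_0_r, Rplus_0_l in H1, H2.
  unfold lin1, lin2; simpl. split.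
  - eapply meq_trans; [exact H1|]. apply meq_add; auto.
  - eapply meq_trans; [exact H2|]. apply meq_add; auto.
Qed.

Lemma K_addZ x y z : SDmul A x y z -> scm (K z) = (scm (K x) + scm (K y))%Z.
Proof. intros H. apply K_hom in H. apply SDmul_iff in H. tauto. Qed.

Lemma K_snd x : scm (K x) = (scm x * scm (K (pt 0 0 1)))%Z.
Proof.
  set (s := scm (K (pt 0 0 1))).
  assert (Hstep : forall m, scm (K (pt 0 0 (1 + m))) = (s + scm (K (pt 0 0 m)))%Z).
  { intro m. apply K_addZ. apply SDmul_iff. rewrite !cm_pt. split; auto.
    rewrite !c1_pt0, !c2_pt0, lin1_0, lin2_0, !Rplus_0_r. split; apply meq_refl. }
  assert (Hpt : forall m, scm (K (pt 0 0 m)) = (m * s)%Z).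
  { intro m. induction m using Z.peano_ind.
    - apply K_T0. reflexivity.
    - rewrite <- Z.add_1_l, Hstep, IHm. ring.
    - pose proof (Hstep (Z.pred m)) as H. replace (1 + Z.pred m)%Z with m in H by lia.
      rewrite IHm in H. nia. }
  assert (H : SDmul A (pt (sc1 x) (sc2 x) 0) (pt 0 0 (scm x)) x).
  { apply SDmul_iff. rewrite !cm_pt. split; auto.
    rewrite !c1_pt0, !c2_pt0, lin1_0, lin2_0, !Rplus_0_r.
    split; apply meq_sym; [apply c1_pt_meq|apply c2_pt_meq]. }
  rewrite (K_addZ _ _ _ H), K_T0 by reflexivity. rewrite Hpt. ring.
Qed.

End Hard.

Lemma conj1 A B Cm : inGL2Z A -> inGL2Z Cm -> B = Mmul (Minv Cm) (Mmul A Cm) ->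
  topgrp_isomorphic (SDmul A) SDopen (SDmul B) SDopen.
Proof.
  intros HA HC ->. exists (Pm (Minv Cm) 1). apply (P_iso _ _ (Minv Cm) Cm 1).
  - apply Minv_r; auto.
  - apply Minv_l; auto.
  - reflexivity.
  - intro m. rewrite Z.mul_1_l, Mzpow_conj; auto.
    rewrite <- Mmul_assoc, <- (Mmul_assoc (Mzpow A m) Cm (Minv Cm)), Minv_r, Mmul_id_r; auto.
Qed.

Lemma neg_iso B : inGL2Z B -> topgrp_isomorphic (SDmul (Minv B)) SDopen (SDmul B) SDopen.
Proof.
  intros HB. exists (Pm Mid (-1)). apply (P_iso _ _ Mid Mid (-1)).
  - apply Mmul_id_l.
  - apply Mmul_id_l.
  - reflexivity.
  - intro m. rewrite Mmul_id_l, Mmul_id_r, <- Mzpow_opp by auto; f_equal; lia.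
Qed.

Lemma topiso_comp {X Y Z} mX oX mY oY mZ oZ :
  @topgrp_isomorphic X Y mX oX mY oY -> @topgrp_isomorphic Y Z mY oY mZ oZ -> topgrp_isomorphic mX oX mZ oZ.
Proof. intros [F HF] [G HG]. exists (fun x => G (F x)). eapply iso_comp; eauto. Qed.

Lemma conj_SD_iso A B Cm : inGL2Z A -> inGL2Z B -> inGL2Z Cm ->
  (B = Mmul (Minv Cm) (Mmul A Cm) \/ Minv B = Mmul (Minv Cm) (Mmul A Cm)) ->
  topgrp_isomorphic (SDmul A) SDopen (SDmul B) SDopen.
Proof.
  intros HA HB HC [H|H].
  - eapply conj1; eauto.
  - eapply topiso_comp; [eapply conj1; eauto|]. apply neg_iso; auto.
Qed.

Lemma K_rel A B K C (HK : is_topgrp_iso (SDmul A) SDopen (SDmul B) SDopen K)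
  (HC : forall t1 t2, meq (sc1 (K (pt t1 t2 0))) (lin1 C t1 t2) /\ meq (sc2 (K (pt t1 t2 0))) (lin2 C t1 t2))
  t1 t2 :
  meq (lin1 (Mmul (Mzpow B (scm (K (pt 0 0 1)))) C) t1 t2) (lin1 (Mmul C A) t1 t2) /\
  meq (lin2 (Mmul (Mzpow B (scm (K (pt 0 0 1)))) C) t1 t2) (lin2 (Mmul C A) t1 t2).
Proof.
  set (p := pt t1 t2 0). set (g := pt 0 0 1).
  set (q := pt (lin1 A (sc1 p) (sc2 p)) (lin2 A (sc1 p) (sc2 p)) 0).
  set (z := pt (lin1 A (sc1 p) (sc2 p)) (lin2 A (sc1 p) (sc2 p)) 1).
  assert (H1 : SDmul A g p z).
  { apply SDmul_iff. unfold g, z. rewrite !cm_pt, Mzpow_1, c1_pt0, c2_pt0, !Rplus_0_l.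
    split; [reflexivity|split; [apply c1_pt_meq|apply c2_pt_meq]]. }
  assert (H2 : SDmul A q g z).
  { apply SDmul_iff. unfold g, z, q. rewrite !cm_pt, Mzpow_0, c1_pt0, c2_pt0, lin1_0, lin2_0, !Rplus_0_r.
    split; [reflexivity|split].
    - eapply meq_trans; [apply c1_pt_meq|]. apply meq_sym, c1_pt_meq.
    - eapply meq_trans; [apply c2_pt_meq|]. apply meq_sym, c2_pt_meq. }
  apply (K_hom A B K HK) in H1. apply (K_hom A B K HK) in H2.
  apply SDmul_iff in H1. apply SDmul_iff in H2.
  destruct H1 as [_ [E1 E2]], H2 as [_ [F1 F2]].
  rewrite (K_T0 A B K HK q) in F1, F2 by reflexivity.
  rewrite Mzpow_0, lin1_id in F1. rewrite Mzpow_0, lin2_id in F2.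
  fold g. set (s := scm (K g)) in *.
  destruct (HC t1 t2) as [P1 P2]. fold p in P1, P2.
  destruct (HC (lin1 A (sc1 p) (sc2 p)) (lin2 A (sc1 p) (sc2 p))) as [Q1 Q2]. fold q in Q1, Q2.
  assert (Hp1 : meq (sc1 p) t1) by apply c1_pt_meq.
  assert (Hp2 : meq (sc2 p) t2) by apply c2_pt_meq.
  rewrite lin1_mul, lin2_mul, lin1_mul, lin2_mul. split.
  - eapply meq_trans; [apply lin1_eqm; apply meq_sym; [exact P1|exact P2]|].
    apply (meq_cancel_l (sc1 (K g))).
    eapply meq_trans; [apply meq_sym; exact E1|].
    eapply meq_trans; [exact F1|]. rewrite (Rplus_comm (sc1 (K q))). apply meq_add; [apply meq_refl|].
    eapply meq_trans; [exact Q1|]. apply lin1_eqm; [apply lin1_eqm|apply lin2_eqm]; auto.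
  - eapply meq_trans; [apply lin2_eqm; apply meq_sym; [exact P1|exact P2]|].
    apply (meq_cancel_l (sc2 (K g))).
    eapply meq_trans; [apply meq_sym; exact E2|].
    eapply meq_trans; [exact F2|]. rewrite (Rplus_comm (sc2 (K q))). apply meq_add; [apply meq_refl|].
    eapply meq_trans; [exact Q2|]. apply lin2_eqm; [apply lin1_eqm|apply lin2_eqm]; auto.
Qed.

Lemma SD_iso_conj A B : inGL2Z A -> inGL2Z B ->
  topgrp_isomorphic (SDmul A) SDopen (SDmul B) SDopen ->
  exists Cm, inGL2Z Cm /\ (B = Mmul (Minv Cm) (Mmul A Cm) \/ Minv B = Mmul (Minv Cm) (Mmul A Cm)).
Proof.
  intros HA HB [K HK].
  destruct (iso_inv _ _ _ _ K (SD_total A) (SD_fun B) HK) as [G [HG [FG GF]]].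
  destruct (K_matrix A B K HK) as [C HC].
  destruct (K_matrix B A G HG) as [D HD].
  assert (HCD : Mmul C D = Mid).
  { apply mat_of_lin. intros t1 t2 _ _.
    set (x := G (pt t1 t2 0)).
    assert (Hx0 : scm x = 0%Z) by (apply (K_T0 B A G HG); reflexivity).
    assert (Hx : x = pt (sc1 x) (sc2 x) 0) by (rewrite <- Hx0; symmetry; apply pt_eta).
    assert (HKx : K x = pt t1 t2 0) by apply FG.
    destruct (HD t1 t2) as [D1 D2]. fold x in D1, D2.
    destruct (HC (sc1 x) (sc2 x)) as [C1 C2]. rewrite <- Hx, HKx in C1, C2.
    rewrite lin1_mul, lin2_mul, lin1_id, lin2_id. split.
    - eapply meq_trans; [apply lin1_eqm; apply meq_sym; [exact D1|exact D2]|].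
      eapply meq_trans; [apply meq_sym; exact C1|]. apply c1_pt_meq.
    - eapply meq_trans; [apply lin2_eqm; apply meq_sym; [exact D1|exact D2]|].
      eapply meq_trans; [apply meq_sym; exact C2|]. apply c2_pt_meq. }
  assert (Hdet : (Mdet C * Mdet D = 1)%Z) by (rewrite <- Mdet_mul, HCD; reflexivity).
  assert (HCg : inGL2Z C) by (unfold inGL2Z; eapply Z.eq_mul_1; eauto).
  assert (HDg : inGL2Z D) by (unfold inGL2Z; rewrite Z.mul_comm in Hdet; eapply Z.eq_mul_1; eauto).
  assert (HDC : Mmul D C = Mid).
  { rewrite (inv_unique C D HCg HCD). apply Minv_l; auto. }
  assert (HCinv : C = Minv D) by (apply inv_unique; auto).
  set (s := scm (K (pt 0 0 1))).
  assert (Hs : s = 1%Z \/ s = (-1)%Z).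
  { pose proof HK as HK2. destruct HK2 as [_ [Ks _]]. destruct (Ks (pt 0 0 1)) as [x Hx].
    pose proof (K_snd A B K HK x) as H. rewrite Hx in H. fold s in H. rewrite cm_pt in H.
    apply (Z.eq_mul_1 s (scm x)). rewrite Z.mul_comm. auto. }
  assert (HBs : Mmul (Mzpow B s) C = Mmul C A).
  { apply mat_of_lin. intros t1 t2 _ _. apply (K_rel A B K C HK HC). }
  assert (Hfin : Mzpow B s = Mmul (Minv D) (Mmul A D)).
  { rewrite <- HCinv. rewrite <- (Mmul_id_r (Mzpow B s)), <- HCD, Mmul_assoc, HBs, Mmul_assoc. reflexivity. }
  exists D. split; auto. destruct Hs as [Hs|Hs]; rewrite Hs in Hfin.
  - left. rewrite Mzpow_1 in Hfin. auto.
  - right. rewrite Mzpow_m1 in Hfin. auto.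
Qed.

Theorem mainTheorem14 (alpha beta : R) (A B : Mat2) :
  0 < alpha -> quadratic_irrational alpha ->
  0 < beta -> quadratic_irrational beta ->
  inGL2Z A -> inGL2Z B -> A <> Mid -> B <> Mid ->
  topgrp_isomorphic (AutMul alpha) (AutOpen alpha) (SDmul A) SDopen ->
  topgrp_isomorphic (AutMul beta) (AutOpen beta) (SDmul B) SDopen ->
  (topgrp_isomorphic (AutMul alpha) (AutOpen alpha) (AutMul beta) (AutOpen beta) <->
   exists Cm : Mat2, inGL2Z Cm /\
     (B = Mmul (Minv Cm) (Mmul A Cm) \/ Minv B = Mmul (Minv Cm) (Mmul A Cm))).
Proof.
  intros _ _ _ _ HA HB _ _ [Ia HIa] [Ib HIb].
  destruct (iso_inv _ _ _ _ Ia (AutMul_total alpha) (SD_fun A) HIa) as [Ia' [HIa' _]].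
  destruct (iso_inv _ _ _ _ Ib (AutMul_total beta) (SD_fun B) HIb) as [Ib' [HIb' _]].
  assert (T1 : topgrp_isomorphic (SDmul A) SDopen (AutMul alpha) (AutOpen alpha)) by (exists Ia'; exact HIa').
  assert (T2 : topgrp_isomorphic (AutMul beta) (AutOpen beta) (SDmul B) SDopen) by (exists Ib; exact HIb).
  assert (T3 : topgrp_isomorphic (AutMul alpha) (AutOpen alpha) (SDmul A) SDopen) by (exists Ia; exact HIa).
  assert (T4 : topgrp_isomorphic (SDmul B) SDopen (AutMul beta) (AutOpen beta)) by (exists Ib'; exact HIb').
  split.
  - intros J. apply SD_iso_conj; auto.
    exact (topiso_comp _ _ _ _ _ _ T1 (topiso_comp _ _ _ _ _ _ J T2)).
  - intros [Cm [HC Hor]].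
    exact (topiso_comp _ _ _ _ _ _ T3 (topiso_comp _ _ _ _ _ _ (conj_SD_iso A B Cm HA HB HC Hor) T4)).
Qed.
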